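(* Let $\mathcal{E}=(E,\leq,\sharp)$ be a prime event structure and $C$ a configuration of $\mathcal{E}$. (i) If $C\xrightarrow{e}C'$ is a step of $\mathcal{E}$, then $\emptyset\triangleright\textsc{espsi}(\mathcal{E},C)\xrightarrow{\overline{e}e}\textsc{espsi}(\mathcal{E},C')$. (ii) Conversely, if $\emptyset\triangleright\textsc{espsi}(\mathcal{E},C)\xrightarrow{\overline{e}e}P'$ for some process $P'$, then there is a configuration $C'$ with $C\xrightarrow{e}C'$ and $P'=\textsc{espsi}(\mathcal{E},C')$.
   Context: A prime event structure is a triple $\mathcal{E}=(E,\leq,\sharp)$ where $E$ is a set of events (names from a nominal set), $\leq$ is a partial order on $E$ with $\{d\mid d\leq e\}$ finite for every $e$, and $\sharp$ is an irreflexive symmetric relation on $E$ with conflict heredity ($d\leq e$ and $d\sharp f$ imply $e\sharp f$). A configuration is a finite, conflict-free, downward-closed subset of $E$. A step $C\xrightarrow{e}C'$ holds iff $C,C'$ are configurations, $e\notin C$ and $C'=C\cup\{e\}$. Psi-calculus fragment. Processes: assertion processes $(\!|\Psi|\!)$, output prefixes $\overline{M}\langle N\rangle.P$, case processes $\mathbf{case}\ \varphi_1:P_1,\dots,\varphi_n:P_n$, and parallel compositions (also of infinite families). Frames: $\mathcal{F}((\!|\Psi|\!))=\Psi$, $\mathcal{F}(P\mid Q)=\mathcal{F}(P)\otimes\mathcal{F}(Q)$ (composition over all components for families), and the frame of prefixed and case processes is the unit $\mathbf{1}$. Transitions $\Psi\triangleright P\xrightarrow{\alpha}P'$ are generated by: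 (Out) if $\Psi\vdash M\leftrightarrow K$ then $\Psi\triangleright\overline{M}\langle N\rangle.P\xrightarrow{\overline{K}N}P$; (Case) if $\Psi\triangleright P_i\xrightarrow{\alpha}P'$ and $\Psi\vdash\varphi_i$ then $\Psi\triangleright\mathbf{case}\ \tilde\varphi:\tilde P\xrightarrow{\alpha}P'$; (Par) if $\Psi\otimes\mathcal{F}(Q)\triangleright P\xrightarrow{\alpha}P'$ then $\Psi\triangleright P\mid Q\xrightarrow{\alpha}P'\mid Q$, symmetrically for $Q$, and for a parallel family one component moves in context $\Psi$ composed with the frames of all other components, the others remaining unchanged. Assertion processes have no transitions. Event-psi instance over $E$: terms are elements of $E$; conditions are pairs $(L,R)$ of subsets of $E$; assertions are subsets of $E$; $\otimes=\cup$; $\mathbf{1}=\emptyset$; entailment: $\Psi\vdash(L,R)$ iff $L\subseteq\Psi$ and $\Psi\cap R=\emptyset$, and $\Psi\vdash a\leftrightarrow b$ iff $a=b$. Translation: $\textsc{espsi}(\mathcal{E},C)=\big|_{e\in E}P_e$ where $P_e=(\!|\{e\}|\!)$ if $e\in C$ and otherwise $P_e=\mathbf{case}\ \varphi_e:\overline{e}\langle e\rangle.(\!|\{e\}|\!)$, with $\varphi_e=(\{d\in E\mid d\leq e,\ d\neq e\},\{d\in E\mid d\sharp e\})$. Processes are compared as $E$-indexed parallel families. *)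

(* Defs.v *)
From Stdlib Require Import List Classical ClassicalEpsilon.
Import ListNotations.
Set Implicit Arguments.

Section PES.
Variable E : Type.

Definition fset_finite (C : E -> Prop) : Prop :=
  exists l : list E, forall x, C x <-> In x l.

Record prime_event_structure (le conf : E -> E -> Prop) : Prop := {
  pes_refl : forall e, le e e;
  pes_antisym : forall d e, le d e -> le e d -> d = e;
  pes_trans : forall d e f, le d e -> le e f -> le d f;
  pes_finite_down : forall e, fset_finite (fun d => le d e);
  pes_irrefl : forall e, ~ conf e e;
  pes_sym : forall d e, conf d e -> conf e d;
  pes_hered : forall d e f, le d e -> conf d f -> conf e f
}.

Definition configuration (le conf : E -> E -> Prop) (C : E -> Prop) : Prop :=
  fset_finite C /\
  (forall d e, C d -> C e -> ~ conf d e) /\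
  (forall d e, le d e -> C e -> C d).

Definition step (le conf : E -> E -> Prop) (C : E -> Prop) (e : E) (C' : E -> Prop) : Prop :=
  configuration le conf C /\ configuration le conf C' /\ ~ C e /\
  (forall x, C' x <-> C x \/ x = e).

Definition assertion := E -> Prop.
Definition a_comp (P Q : assertion) : assertion := fun x => P x \/ Q x.
Definition a_unit : assertion := fun _ => False.

Definition condition := ((E -> Prop) * (E -> Prop))%type.

Definition entails_cond (Psi : assertion) (phi : condition) : Prop :=
  (forall x, fst phi x -> Psi x) /\ (forall x, Psi x -> snd phi x -> False).

Definition entails_chan (Psi : assertion) (a b : E) : Prop := a = b.

Inductive proc : Type :=
| PAssert : assertion -> proc
| POut : E -> E -> proc -> proc
| PCase : list (condition * proc) -> proc
| PPar : proc -> proc -> proc.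

Fixpoint frame (P : proc) : assertion :=
  match P with
  | PAssert Psi => Psi
  | PPar P Q => a_comp (frame P) (frame Q)
  | _ => a_unit
  end.

Inductive label : Type := LOut : E -> E -> label.

Inductive trans : assertion -> proc -> label -> proc -> Prop :=
| TOut : forall Psi M K N P,
    entails_chan Psi M K -> trans Psi (POut M N P) (LOut K N) P
| TCase : forall Psi l phi P a P',
    In (phi, P) l -> trans Psi P a P' -> entails_cond Psi phi ->
    trans Psi (PCase l) a P'
| TParL : forall Psi P Q a P',
    trans (a_comp Psi (frame Q)) P a P' -> trans Psi (PPar P Q) a (PPar P' Q)
| TParR : forall Psi P Q a Q',
    trans (a_comp Psi (frame P)) Q a Q' -> trans Psi (PPar P Q) a (PPar P Q').

(* E-indexed parallel families |_{e in E} F e *)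
Definition family := E -> proc.

Definition frame_others (F : family) (e : E) : assertion :=
  fun x => exists d, d <> e /\ frame (F d) x.

Definition trans_fam (Psi : assertion) (F : family) (a : label) (F' : family) : Prop :=
  exists e P', trans (a_comp Psi (frame_others F e)) (F e) a P' /\
    F' e = P' /\ (forall d, d <> e -> F' d = F d).

Definition phi_e (le conf : E -> E -> Prop) (e : E) : condition :=
  (fun d => le d e /\ d <> e, fun d => conf d e).

Definition espsi (le conf : E -> E -> Prop) (C : E -> Prop) : family :=
  fun e =>
    if excluded_middle_informative (C e) then PAssert (fun d => d = e)
    else PCase [(phi_e le conf e, POut e e (PAssert (fun d => d = e)))].

End PES.

(* Main.v *)
Require Import Defs.
From Stdlib Require Import List Classical ClassicalEpsilon FunctionalExtensionality.
Import ListNotations.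

Lemma espsi_ext (E : Type) (le conf : E -> E -> Prop) (C C' : E -> Prop) d :
  (C d <-> C' d) -> espsi le conf C d = espsi le conf C' d.
Proof.
  intros H; unfold espsi.
  destruct (excluded_middle_informative (C d)), (excluded_middle_informative (C' d));
    tauto.
Qed.

Theorem mainTheorem2 (E : Type) (le conf : E -> E -> Prop)
  (HE : prime_event_structure le conf) (C : E -> Prop)
  (HC : configuration le conf C) :
  (forall (e : E) (C' : E -> Prop), step le conf C e C' ->
     trans_fam (@a_unit E) (espsi le conf C) (LOut e e) (espsi le conf C')) /\
  (forall (e : E) (P' : family E),
     trans_fam (@a_unit E) (espsi le conf C) (LOut e e) P' ->
     exists C' : E -> Prop, step le conf C e C' /\ P' = espsi le conf C').
Proof.
  split.
  - intros e C' [HC0 [[Hf' [Hcf' Hdc']] [He HC']]].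
    exists e, (PAssert (fun d => d = e)). split; [|split].
    + assert (Hee : espsi le conf C e = PCase [(phi_e le conf e, POut e e (PAssert (fun d => d = e)))]).
      { unfold espsi. destruct (excluded_middle_informative (C e)); [contradiction|reflexivity]. }
      rewrite Hee. eapply TCase. left; reflexivity. constructor. reflexivity.
      split.
      * intros x [Hx Hne]. right. exists x. split; auto.
        unfold espsi. destruct (excluded_middle_informative (C x)) as [|n].
        reflexivity. exfalso. apply n.
        assert (C' x) by (eapply Hdc'; eauto; apply HC'; auto).
        apply HC' in H. destruct H; congruence.
      * intros x [[]|[d [Hd Hfr]]] Hc. simpl in Hc.
        unfold espsi in Hfr. destruct (excluded_middle_informative (C d)) as [Cd|];
          [|simpl in Hfr; contradiction]. simpl in Hfr. subst x.
        eapply Hcf'; [apply HC'; left; exact Cd | apply HC'; right; reflexivity | exact Hc].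
    + unfold espsi. destruct (excluded_middle_informative (C' e)) as [|n]. reflexivity.
      exfalso; apply n, HC'; auto.
    + intros d Hd. symmetry. apply espsi_ext. rewrite HC'. intuition.
  - intros e P' [e0 [P'' [Ht [He0 Hoth]]]].
    destruct (classic (C e0)) as [Ce0|nCe0].
    { assert (espsi le conf C e0 = PAssert (fun d => d = e0)) as Hq.
      { unfold espsi. destruct (excluded_middle_informative (C e0)); [reflexivity|contradiction]. }
      rewrite Hq in Ht. inversion Ht. }
    assert (Hq : espsi le conf C e0 = PCase [(phi_e le conf e0, POut e0 e0 (PAssert (fun d => d = e0)))]).
    { unfold espsi. destruct (excluded_middle_informative (C e0)); [contradiction|reflexivity]. }
    rewrite Hq in Ht.
    inversion Ht as [|? ? phi P ? ? Hin Htr Hent| |]; subst.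
    destruct Hin as [Hin|[]]. injection Hin as <- <-.
    inversion Htr as [? ? K ? ? Hch| | |]; subst.
    unfold entails_chan in Hch; subst.
    destruct Hent as [HL HR]. simpl in HL, HR.
    destruct HC as [[l Hl] [Hcf Hdc]].
    assert (HL' : forall x, le x e -> x <> e -> C x).
    { intros x Hx Hne. destruct (HL x (conj Hx Hne)) as [[]|[d [Hd Hfr]]].
      unfold espsi in Hfr. destruct (excluded_middle_informative (C d)); simpl in Hfr;
        [subst; auto | contradiction]. }
    assert (HR' : forall x, C x -> conf x e -> False).
    { intros x Cx Hc. assert (x <> e) by congruence. apply (HR x); auto.
      right. exists x. split; auto. unfold espsi.
      destruct (excluded_middle_informative (C x)); [reflexivity|contradiction]. }
    exists (fun x => C x \/ x = e). split.
    + split; [split; [exists l; exact Hl | split; auto] |].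
      split; [|split; [exact nCe0 | intros; tauto]].
      split; [exists (e :: l); intros x; simpl; rewrite Hl; intuition |].
      split.
      * intros d f [Cd|Ed] [Cf|Ef] Hc.
        -- exact (Hcf d f Cd Cf Hc).
        -- rewrite Ef in Hc. exact (HR' d Cd Hc).
        -- rewrite Ed in Hc. exact (HR' f Cf (pes_sym HE _ _ Hc)).
        -- rewrite Ed, Ef in Hc. exact (pes_irrefl HE _ Hc).
      * intros d f Hdf [Cf|Ef]; subst.
        -- left; eapply Hdc; eauto.
        -- destruct (classic (d = e)); [right; auto | left; apply HL'; auto].
    + apply functional_extensionality. intros d.
      destruct (classic (d = e)) as [Hde|Hne]; [subst d|].
      * unfold espsi. destruct (excluded_middle_informative (C e \/ e = e)) as [|n].
        symmetry; assumption. exfalso; apply n; auto.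
      * rewrite Hoth by auto. apply espsi_ext. intuition.
Qed.
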